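(* Let $\mathbf B=(\mathbf b_1,\dots,\mathbf b_n)\in\mathbb Q^{d\times n}$ be a basis of a lattice $\mathcal{L}$, let $k\in[n]$ and $\alpha>\sqrt n$ be such that $\|\tilde{\mathbf b}_i\|\le\|\tilde{\mathbf b}_j\|/\alpha$ for all $i\le k<j$. If $\mathcal{L}'\subseteq\mathcal{L}$ is a primitive sublattice of rank $\ell\ge k$ with \[ \det(\mathcal{L}')<\Big(\frac{\alpha}{\sqrt{n\,\delta_{\ell,k}}}\prod_{i=1}^k\|\tilde{\mathbf b}_i\|\Big)^{\ell/k}, \] then $\mathbf b_1,\dots,\mathbf b_k\in\mathcal{L}'$.
   Context: Gram–Schmidt orthogonalization: $\tilde{\mathbf b}_1=\mathbf b_1$, $\tilde{\mathbf b}_i=\Pi_{\{\mathbf b_1,\dots,\mathbf b_{i-1}\}^\perp}(\mathbf b_i)$. A sublattice $\mathcal{M}\subseteq\mathcal{L}$ is primitive if $\mathcal{M}=\mathcal{L}\cap\mathrm{span}(\mathcal{M})$. Rankin's constant: for $1\le k\le m$, $\delta_{m,k}:=\sup_{\mathcal{M}}\min_{\mathcal{M}'\subseteq\mathcal{M},\ \mathrm{rank}(\mathcal{M}')=k}\det(\mathcal{M}')^2/\det(\mathcal{M})^{2k/m}$, the supremum over all lattices $\mathcal{M}$ of rank $m$ (so $\delta_{m,m}=1$). *)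

(* Defs.v *)
From HB Require Import structures.
From mathcomp Require Import all_boot all_order all_algebra.
From mathcomp Require Import classical_sets reals exp.
Set Implicit Arguments. Unset Strict Implicit. Unset Printing Implicit Defensive.
Import Order.TTheory GRing.Theory Num.Theory.
Local Open Scope ring_scope.
Local Open Scope classical_set_scope.

(* Vectors of R^d are row vectors 'rV[R]_d; a family of n vectors is the
   matrix 'M[R]_(n,d) whose i-th row is the i-th vector. *)

Section Lattices.
Variable R : realType.

Definition dotv (d : nat) (u v : 'rV[R]_d) : R := (u *m v^T) 0 0.
Definition normv (d : nat) (u : 'rV[R]_d) : R := Num.sqrt (dotv u u).

Definition lat (n d : nat) (B : 'M[R]_(n, d)) : set 'rV[R]_d :=
  [set v | exists z : 'I_n -> int, v = \sum_(i < n) (z i)%:~R *: row i B].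

Definition rspan (n d : nat) (B : 'M[R]_(n, d)) : set 'rV[R]_d :=
  [set v | exists c : 'I_n -> R, v = \sum_(i < n) c i *: row i B].

Definition detL (n d : nat) (B : 'M[R]_(n, d)) : R := Num.sqrt (\det (B *m B^T)).

(* Gram-Schmidt vector b~_i = projection of b_i onto {b_1,...,b_(i-1)}^perp :
   the (unique) w with b_i - w in span(b_j, j < i) and w orthogonal to
   every b_j, j < i. *)
Definition gso (n d : nat) (B : 'M[R]_(n, d)) (i : 'I_n) : 'rV[R]_d :=
  xget 0 [set w | (exists c : 'I_n -> R,
                      row i B - w = \sum_(j < n | (j < i)%N) c j *: row j B)
                  /\ (forall j : 'I_n, (j < i)%N -> dotv w (row j B) = 0)].

Definition rankin (m k : nat) : R :=
  sup [set x : R | exists (d : nat) (M : 'M[R]_(m, d)), row_free M /\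
        x = inf [set y : R | exists C : 'M[R]_(k, d), row_free C /\
                   (forall i : 'I_k, lat M (row i C)) /\
                   y = detL C ^+ 2 / powR (detL M) (2 * k%:R / m%:R)]].

End Lattices.

(* Main.v *)
Require Import Defs.
From HB Require Import structures.
From mathcomp Require Import all_boot all_order all_algebra.
From mathcomp Require Import classical_sets reals exp.
From mathcomp Require Import zify ring lra.
From Stdlib Require Import Classical.
Import Order.TTheory GRing.Theory Num.Theory.
Local Open Scope ring_scope.

Section Aux.
Set Implicit Arguments. Unset Strict Implicit.
Variable R : realType.

Definition gram {m d} (M : 'M[R]_(m, d)) : R := \det (M *m M^T).

Lemma dotvE d (u v : 'rV[R]_d) : dotv u v = \sum_i u 0 i * v 0 i.
Proof. by rewrite /dotv mxE; apply: eq_bigr => i _; rewrite mxE. Qed.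

Lemma dotvC d (u v : 'rV[R]_d) : dotv u v = dotv v u.
Proof. by rewrite !dotvE; apply: eq_bigr => i _; rewrite mulrC. Qed.

Lemma dotvDl d (u v w : 'rV[R]_d) : dotv (u + v) w = dotv u w + dotv v w.
Proof. by rewrite !dotvE -big_split; apply: eq_bigr => i _; rewrite mxE mulrDl. Qed.

Lemma dotvZl d a (u w : 'rV[R]_d) : dotv (a *: u) w = a * dotv u w.
Proof. by rewrite !dotvE mulr_sumr; apply: eq_bigr => i _; rewrite mxE mulrA. Qed.

Lemma dotvNl d (u w : 'rV[R]_d) : dotv (- u) w = - dotv u w.
Proof. by rewrite -scaleN1r dotvZl mulN1r. Qed.

Lemma dotvBl d (u v w : 'rV[R]_d) : dotv (u - v) w = dotv u w - dotv v w.
Proof. by rewrite dotvDl dotvNl. Qed.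

Lemma dotv_suml d (I : finType) (P : pred I) (F : I -> 'rV[R]_d) w :
  dotv (\sum_(i | P i) F i) w = \sum_(i | P i) dotv (F i) w.
Proof.
elim/big_rec2: _ => [|i x y _ <-]; last by rewrite dotvDl.
by rewrite dotvE big1 // => i _; rewrite mxE mul0r.
Qed.

Lemma dotv_ge0 d (u : 'rV[R]_d) : 0 <= dotv u u.
Proof. by rewrite dotvE sumr_ge0 // => i _; rewrite -expr2 sqr_ge0. Qed.

Lemma dotv_eq0 d (u : 'rV[R]_d) : dotv u u = 0 -> u = 0.
Proof.
rewrite dotvE => /eqP; rewrite psumr_eq0 => [/allP H|i _]; last by rewrite -expr2 sqr_ge0.
apply/rowP => j; rewrite mxE; have := H j (mem_index_enum j).
by rewrite -expr2 sqrf_eq0 => /eqP.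
Qed.

Lemma normv_sqr d (u : 'rV[R]_d) : normv u ^+ 2 = dotv u u.
Proof. by rewrite /normv sqr_sqrtr // dotv_ge0. Qed.

Lemma YYt0 m d (Y : 'M[R]_(m, d)) : Y *m Y^T = 0 -> Y = 0.
Proof.
move=> H; apply/matrixP => i j.
have : dotv (row i Y) (row i Y) = 0.
  have E := congr1 (fun A : 'M_m => A i i) H; rewrite /= !mxE in E.
  rewrite dotvE -[RHS]E; apply: eq_bigr => t _; rewrite !mxE //.
move/dotv_eq0/rowP/(_ j); rewrite !mxE => ->; by [].
Qed.

Lemma rank_MMt m d (A : 'M[R]_(m, d)) : \rank (A *m A^T) = \rank A.
Proof.
apply/eqP; rewrite eqn_leq mxrankM_maxl /=.
have sK : (kermx (A *m A^T) <= kermx A)%MS.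
  apply/sub_kermxP; apply: YYt0.
  by rewrite trmx_mul mulmxA -[_ *m A *m A^T]mulmxA (sub_kermxP (submx_refl _)) mul0mx.
have := mxrankS sK; rewrite !mxrank_ker.
have := rank_leq_row A; have := rank_leq_row (A *m A^T); lia.
Qed.

Lemma gram_neq0 m d (A : 'M[R]_(m, d)) : row_free A -> gram A != 0.
Proof.
move=> fA; have : row_free (A *m A^T) by rewrite /row_free rank_MMt.
by rewrite row_free_unit unitmxE unitfE.
Qed.

Lemma proj_ex m d (A : 'M[R]_(m, d)) (v : 'rV[R]_d) :
  exists c : 'rV[R]_m, (v - c *m A) *m A^T = 0.
Proof.
have s1 : (A *m A^T <= A^T)%MS by apply: submxMl.
have s2 : (A^T <= A *m A^T)%MS.
  by have := mxrank_leqif_sup s1; rewrite rank_MMt mxrank_tr => /leqifP; rewrite ltnn; case: ifP.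
have /submxP [c Hc] : (v *m A^T <= A *m A^T)%MS by apply: submx_trans s2; apply: submxMl.
by exists c; rewrite mulmxBl Hc mulmxA subrr.
Qed.

Lemma gram_mul m d (U : 'M[R]_m) (M : 'M[R]_(m, d)) :
  gram (U *m M) = \det U ^+ 2 * gram M.
Proof.
by rewrite /gram trmx_mul !mulmxA !det_mulmx -!mulmxA det_mulmx det_tr; ring.
Qed.

Lemma gram_col_orth m d (w : 'rV[R]_d) (A : 'M[R]_(m, d)) :
  w *m A^T = 0 -> gram (col_mx w A) = dotv w w * gram A.
Proof.
move=> H; rewrite /gram tr_col_mx mul_col_row.
have H' : A *m w^T = 0 by rewrite -(trmxK (A *m w^T)) trmx_mul trmxK H trmx0.
by rewrite H H' det_ublock det_mx11.
Qed.

Lemma gram_col m d (v : 'rV[R]_d) (A : 'M[R]_(m, d)) (c : 'rV[R]_m) :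
  (v - c *m A) *m A^T = 0 ->
  gram (col_mx v A) = dotv (v - c *m A) (v - c *m A) * gram A.
Proof.
move=> H; rewrite -gram_col_orth //.
have -> : col_mx (v - c *m A) A = block_mx 1%:M (- c) 0 1%:M *m col_mx v A.
  by rewrite mul_block_col !mul1mx mul0mx add0r mulNmx.
by rewrite gram_mul det_ublock !det1 mulr1 expr1n mul1r.
Qed.

Lemma gram_ge0 m d (A : 'M[R]_(m, d)) : 0 <= gram A.
Proof.
elim: m A => [|m IH] A; first by rewrite /gram det_mx00.
have [c Hc] := proj_ex (dsubmx (A : 'M_(1 + m, d))) (usubmx (A : 'M_(1 + m, d))).
rewrite -[A](vsubmxK (A : 'M_(1 + m, d))) (gram_col Hc).
by rewrite mulr_ge0 // dotv_ge0.
Qed.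

Definition gso_P n d (B : 'M[R]_(n, d)) (i : 'I_n) (w : 'rV[R]_d) :=
  (exists c : 'I_n -> R,
     row i B - w = \sum_(j < n | (j < i)%N) c j *: row j B)
  /\ (forall j : 'I_n, (j < i)%N -> dotv w (row j B) = 0).

Lemma gso_spec n d (B : 'M[R]_(n, d)) (i : 'I_n) : gso_P B i (gso B i).
Proof.
pose Ai : 'M[R]_(n, d) := \matrix_(j, t) (if (j < i)%N then B j t else 0).
have [c Hc] := proj_ex Ai (row i B).
have Pw : gso_P B i (row i B - c *m Ai).
  split.
    exists (fun j => c 0 j); rewrite opprB addrC subrK mulmx_sum_row.
    rewrite [RHS]big_mkcond; apply: eq_bigr => j _ /=.
    case: ifP => hj; last by apply/rowP => t; rewrite !mxE hj mulr0.
    by congr (_ *: _); apply/rowP => t; rewrite !mxE hj.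
  move=> j hj; have := congr1 (fun A : 'M_(1, n) => A 0 j) Hc.
  rewrite /= !mxE dotvE => E; rewrite -[RHS]E; apply: eq_bigr => t _.
  by rewrite !mxE hj.
rewrite /gso; case: xgetP => // Hn; exfalso; exact: (Hn _ Pw).
Qed.

Lemma sum_split_top n (V : zmodType) (F : 'I_n -> V) (J : 'I_n) :
  (forall j : 'I_n, (J < j)%N -> F j = 0) ->
  \sum_j F j = \sum_(j : 'I_n | (j < J)%N) F j + F J.
Proof.
move=> HF; rewrite (bigD1 J) //= addrC; congr (_ + _).
rewrite big_mkcond [RHS]big_mkcond; apply: eq_bigr => j _.
case: (ltngtP j J) => h.
- by case: eqP => // E; rewrite E ltnn in h.
- by rewrite HF // if_same.
- have -> : j = J by apply: val_inj.
  by rewrite eqxx.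

Qed.

Lemma dotv_sumr d (I : finType) (P : pred I) (F : I -> 'rV[R]_d) w :
  dotv w (\sum_(i | P i) F i) = \sum_(i | P i) dotv w (F i).
Proof. by rewrite dotvC dotv_suml; apply: eq_bigr => i _; rewrite dotvC. Qed.

Lemma gs_bound n d (B : 'M[R]_(n, d)) (y : 'rV[R]_n) (J : 'I_n) :
  (forall j : 'I_n, (J < j)%N -> y 0 j = 0) ->
  y 0 J ^+ 2 * dotv (gso B J) (gso B J) <= dotv (y *m B) (y *m B).
Proof.
move=> Hy; have [[c Hc] Horth] := gso_spec B J.
set g := gso B J in Hc Horth *.
set u := \sum_(j < n | (j < J)%N) (y 0 j + y 0 J * c j) *: row j B.
have Hyu : y *m B = y 0 J *: g + u.
  rewrite mulmx_sum_row (sum_split_top (J := J)); last first.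
    by move=> j hj; rewrite Hy // scale0r.
  have -> : u = \sum_(j < n | (j < J)%N) y 0 j *: row j B + y 0 J *: (row J B - g).
    rewrite Hc /u scaler_sumr -big_split /=; apply: eq_bigr => j _.
    by rewrite scalerDl scalerA.
  by rewrite scalerBr addrA addrC addrA addrNK addrC.
have Hgu : dotv g u = 0.
  by rewrite dotv_sumr big1 // => j hj; rewrite dotvC dotvZl dotvC Horth // mulr0.
rewrite Hyu !dotvDl !dotvZl ![dotv _ (_ + _)]dotvC !dotvDl !dotvZl.
rewrite Hgu [dotv u g]dotvC Hgu !mulr0 !addr0 mulrA -expr2.
by rewrite add0r lerDl dotv_ge0.
Qed.

Lemma comb n k (hkn : (k <= n)%N) (w : 'I_n -> R) (a : R) (ha : 1 <= a)
  (w0 : forall i, 0 <= w i)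
  (gap : forall i j : 'I_n, (i < k)%N -> (k <= j)%N -> a * w i <= w j)
  (p : 'I_k -> 'I_n) (pinj : injective p) (r0 : 'I_k) (hr0 : (k <= p r0)%N) :
  a * \prod_(i < n | (i < k)%N) w i <= \prod_r w (p r).
Proof.
pose S := p @: [set: 'I_k]; pose K := [set i : 'I_n | (i < k)%N].
have cS : #|S| = k by rewrite /S card_imset // cardsT card_ord.
have cK : #|K| = k.
  have -> : K = widen_ord hkn @: [set: 'I_k].
    apply/setP => i; rewrite /K inE; apply/idP/imsetP => [hi|[j _ ->]]; last exact: (ltn_ord j).
    by exists (Ordinal hi) => //; apply: val_inj.
  rewrite card_imset ?cardsT ?card_ord // => x y H; apply: val_inj; exact: (congr1 val H).
have -> : \prod_r w (p r) = \prod_(i in S) w i.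
  rewrite /S big_imset /=; last by move=> x y _ _; exact: pinj.
  by apply: eq_bigl => i; rewrite inE.
have -> : \prod_(i < n | (i < k)%N) w i = \prod_(i in K) w i.
  by apply: eq_bigl => i; rewrite /K inE.
rewrite [\prod_(i in K) _](big_setID S) [\prod_(i in S) _](big_setID K) /= (finset.setIC K).
set s := #|S :\: K|.
have cR : #|K :\: S| = s.
  have := cardsID S K; have := cardsID K S; rewrite cS cK finset.setIC /s; lia.
have s1 : (0 < s)%N.
  rewrite /s card_gt0; apply/set0Pn; exists (p r0).
  by rewrite !inE -leqNgt hr0 /=; apply/imsetP; exists r0; rewrite ?inE.
pose A := \big[Num.max/0]_(i in K) w i.
have hA : forall i, i \in K -> w i <= A by move=> i hi; exact: le_bigmax_cond.
have a0 : 0 < a by apply: lt_le_trans ha; exact: ltr01.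
have A0 : 0 <= A.
  apply: le_trans (w0 (widen_ord hkn r0)) (hA _ _); rewrite inE; exact: (ltn_ord r0).
have hAS : forall j, j \in S :\: K -> a * A <= w j.
  move=> j; rewrite !inE -leqNgt => /andP [hj _].
  have : A <= w j / a.
    apply: bigmax_le => [|i]; first by rewrite divr_ge0 // ltW.
    rewrite inE => hi; rewrite ler_pdivlMr // mulrC; exact: gap.
  by rewrite ler_pdivlMr // mulrC.
have hY : \prod_(i in K :\: S) w i <= A ^+ s.
  rewrite -cR -prodr_const; apply: ler_prod => i; rewrite !inE => /andP [_ hi].
  by rewrite w0 hA // inE.
have hZ : (a * A) ^+ s <= \prod_(i in S :\: K) w i.
  rewrite -prodr_const; apply: ler_prod => i hi.
  by rewrite mulr_ge0 ?(ltW a0) //= (hAS i hi).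
have hX : 0 <= \prod_(i in S :&: K) w i by apply: prodr_ge0 => i _.
rewrite mulrCA; apply: ler_wpM2l => //; apply: le_trans hZ.
rewrite exprMn; apply: le_trans (ler_wpM2l (ltW a0) hY) _.
rewrite ler_wpM2r ?exprn_ge0 //.
by rewrite -(prednK s1) exprS ler_peMr ?(ltW a0) // exprn_ege1.
Qed.

End Aux.

Section Ech.
Variable R : realType.
Variables (n d : nat) (B : 'M[R]_(n, d)).
Local Notation mz Z := (map_mx (intr : int -> R) Z).
Local Notation w j := (dotv (gso B j) (gso B j)).

Lemma split_lshift1 m (i : 'I_1) : split (lshift m i) = inl i.
Proof. exact: (unsplitK (inl _ i)). Qed.
Lemma split_rshift1 m (i : 'I_m) : split (rshift 1 i) = inr i.
Proof. exact: (unsplitK (inr _ i)). Qed.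

Lemma int_unit_sqr (x : int) : x \is a GRing.unit -> x ^+ 2 = 1.
Proof. by have : x \is a GRing.unit = (x == 1) || (x == -1) by []; move=> -> /orP [] /eqP ->. Qed.

Lemma echelon m (Z : 'M[int]_(m, n)) : gram (mz Z *m B) != 0 ->
  exists p : 'I_m -> 'I_n, [/\ injective p,
    \prod_r w (p r) <= gram (mz Z *m B),
    forall r, exists r', Z r' (p r) != 0 &
    forall r j, Z r j != 0 -> exists r', (j <= p r')%N].
Proof.
elim: m Z => [|m IH] Z HZ.
  have p : 'I_0 -> 'I_n by case.
  exists p; split; try by case.
  by rewrite big_ord0 /gram det_mx00.
have [[r0 j0] /= nz0] : exists x : 'I_m.+1 * 'I_n, Z x.1 x.2 != 0.
  case: (pickP (fun x : 'I_m.+1 * 'I_n => Z x.1 x.2 != 0)) => [x Hx|H0]; first by exists x.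
  have Z0 : Z = 0 by apply/matrixP => i j; have := H0 (i, j); rewrite /= mxE => /negbFE/eqP.
  by move: HZ; rewrite Z0 map_mx0 mul0mx /gram mul0mx det0 eqxx.
pose P := fun j : 'I_n => [exists r, Z r j != 0].
have P0 : P j0 by apply/existsP; exists r0.
case: (arg_maxnP (fun j : 'I_n => (j : nat)) P0) => J PJ Jmax.
have Zout : forall r (j : 'I_n), (J < j)%N -> Z r j = 0.
  move=> r j hj; apply/eqP; apply: contraTT hj => nz.
  by rewrite -leqNgt; apply: Jmax; apply/existsP; exists r.
have [L uL [R1 uR1 [dd _ Ecol]]] := int_Smith_normal_form (col J Z).
pose U := invmx L.
have UZ : U *m col J Z = \matrix_(i, j) (dd`_i *+ (i == j :> nat)) *m R1.
  by rewrite Ecol -mulmxA /U mulKmx.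
have detU : (\det U) ^+ 2 = 1 by apply: int_unit_sqr; rewrite -unitmxE unitmx_inv.
pose Z' := U *m Z.
have Z'col : forall r : 'I_m.+1, Z' r J = (U *m col J Z) r 0.
  by move=> r; rewrite /Z' !mxE; apply: eq_bigr => t _; rewrite !mxE.
have Z'0 : forall r : 'I_m.+1, r != ord0 -> Z' r J = 0.
  move=> r hr; rewrite Z'col UZ !mxE big_ord1 !mxE.
  have hr' : (r : nat) != 0%N by apply: contra hr => /eqP h; apply/eqP/val_inj.
  by rewrite [_ == _](negbTE hr') mulr0n mul0r.
have Z'out : forall r (j : 'I_n), (J < j)%N -> Z' r j = 0.
  by move=> r j hj; rewrite /Z' mxE big1 // => t _; rewrite Zout // mulr0.
have Z'nz : Z' ord0 J != 0.
  apply/negP => /eqP H0.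
  have UZ0 : U *m col J Z = 0.
    apply/matrixP => r c; rewrite (ord1 c) -Z'col [RHS]mxE.
    by case: (eqVneq r ord0) => [->|hr]; [exact: H0 | exact: Z'0].
  have : col J Z = 0 by rewrite -(mulKVmx uL (col J Z)) -/U UZ0 mulmx0.
  move/matrixP => C0; case/existsP: PJ => r; have := C0 r ord0.
  by rewrite !mxE => ->; rewrite eqxx.
have gramM' : gram (mz Z' *m B) = gram (mz Z *m B).
  by rewrite /Z' map_mxM -mulmxA gram_mul det_map_mx -rmorphXn detU rmorph1 mul1r.
have Z'used : forall r j, Z' r j != 0 -> exists r', Z r' j != 0.
  move=> r j nz; case: (pickP (fun t => Z t j != 0)) => [t ht|H0]; first by exists t.
  move: nz; rewrite /Z' mxE big1 ?eqxx // => t _.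
  by have := H0 t; rewrite /= => /negbFE/eqP ->; rewrite mulr0.
clearbody Z'.
pose y : 'rV[int]_n := usubmx (Z' : 'M_(1 + m, n)).
pose Z1 : 'M[int]_(m, n) := dsubmx (Z' : 'M_(1 + m, n)).
have Esplit : mz Z' *m B = col_mx (mz y *m B) (mz Z1 *m B).
  have -> : Z' = col_mx y Z1 by rewrite /y /Z1 vsubmxK.
  exact: (etrans (congr1 (mulmx^~ B) (map_col_mx _ y Z1)) (mul_col_mx _ _ _)).
have [c Hc] := proj_ex (mz Z1 *m B) (mz y *m B).
have Eg := gram_col Hc.
have gA : gram (mz Z1 *m B) != 0.
  by apply: contra HZ => /eqP g0; rewrite -gramM' Esplit Eg g0 mulr0.
have [p1 [inj1 pr1 used1 bnd1]] := IH Z1 gA.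
have yE : forall j, y 0 j = Z' ord0 j.
  by move=> j; rewrite mxE; congr (Z' _ j); apply: val_inj.
have Z1E : forall r j, Z1 r j = Z' (rshift 1 r) j.
  by move=> r j; rewrite mxE.
clearbody y Z1.
pose y' := mz y - c *m mz Z1.
have y'E : forall j, y' 0 j = (Z' ord0 j)%:~R - \sum_t c 0 t * (Z' (rshift 1 t) j)%:~R.
  move=> j; rewrite !mxE yE; congr (_ - _); apply: eq_bigr => t _; by rewrite !mxE Z1E.
have Ey : mz y *m B - c *m (mz Z1 *m B) = y' *m B by rewrite /y' mulmxBl mulmxA.
clearbody y'.
have y'out : forall j : 'I_n, (J < j)%N -> y' 0 j = 0.
  move=> j hj; rewrite y'E Z'out // big1 ?subr0 // => t _.
  by rewrite Z'out // mulr0.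
have y'J : y' 0 J = (Z' ord0 J)%:~R.
  rewrite y'E big1 ?subr0 // => t _.
  rewrite Z'0 ?mulr0 //; apply/eqP => /(congr1 val) /=; by [].
have gsb := gs_bound B y'out.
have y'sq : 1 <= y' 0 J ^+ 2.
  rewrite y'J -rmorphXn /= -(rmorph1 (intr : int -> R)) ler_int.
  move: Z'nz; set z := Z' ord0 J => hz; lia.
have p1J : forall r, (p1 r < J)%N.
  move=> r; have [r' hr'] := used1 r; move: hr'; rewrite Z1E => hr'.
  rewrite ltn_neqAle; apply/andP; split.
    apply/negP => /eqP e; have e' : p1 r = J by apply: val_inj.
    by move: hr'; rewrite e' Z'0 ?eqxx //; apply/eqP => /(congr1 val).
  by rewrite leqNgt; apply/negP => h; move: hr'; rewrite Z'out ?eqxx.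
pose p : 'I_m.+1 -> 'I_n := fun r =>
  match split (r : 'I_(1 + m)) with inl _ => J | inr r' => p1 r' end.
have pE0 : p ord0 = J by rewrite /p; case: splitP => [j _|k hk] //.
have pE1 : forall i, p (lift ord0 i) = p1 i.
  move=> i; rewrite /p; case: splitP => [j hj|k hk].
    by move: (ltn_ord j); rewrite -hj.
  by congr (p1 _); apply: val_inj; move: hk => /= [].
exists p; split.
- move=> a b; rewrite /p; case: splitP => [a0 ha|a1 ha]; case: splitP => [b0 hb|b1 hb].
  + move=> _; move: ha hb; rewrite (ord1 a0) (ord1 b0) => ha hb.
    by apply: val_inj; exact: (etrans ha (esym hb)).
  + by move=> e; have := p1J b1; rewrite -e ltnn.
  + by move=> e; have := p1J a1; rewrite e ltnn.
  + move=> /inj1 e; apply: val_inj; rewrite e in ha.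
    exact: (etrans ha (esym hb)).
- rewrite big_ord_recl pE0; under eq_bigr do rewrite pE1.
  rewrite -gramM' Esplit Eg Ey; apply: ler_pM.
  + exact: dotv_ge0.
  + by apply: prodr_ge0 => i _; exact: dotv_ge0.
  + apply: le_trans gsb; rewrite ler_peMl ?dotv_ge0 //.
  + exact: pr1.
- move=> r; rewrite /p; case: (split _) => [_|r'].
    by case/existsP: PJ => r1 h; exists r1.
  have [r'' h] := used1 r'; move: h; rewrite Z1E; exact: Z'used.
- move=> r j h; exists ord0; rewrite pE0; apply: Jmax.
  by apply/existsP; exists r.
Qed.

Lemma core k (hkn : (k <= n)%N) (a : R) (ha : 1 <= a)
  (gap : forall i j : 'I_n, (i < k)%N -> (k <= j)%N -> a * w i <= w j)
  (M : 'M[R]_(k, d)) (Mfree : row_free M) (Mlat : forall r, lat B (row r M))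
  (Msmall : gram M < a * \prod_(i < n | (i < k)%N) w i) :
  (M <= \matrix_(i < k) row (widen_ord hkn i) B)%MS.
Proof.
have [z Hz] := fin_all_exists Mlat.
pose Z : 'M[int]_(k, n) := \matrix_(r, j) z r j.
have EM : M = mz Z *m B.
  apply/row_matrixP => r; rewrite row_mul mulmx_sum_row Hz.
  by apply: eq_bigr => j _; rewrite !mxE.
have g0 : gram (mz Z *m B) != 0 by rewrite -EM gram_neq0.
have [p [pinj pr used bnd]] := echelon g0.
apply/row_subP => r.
case: (boolP [forall j : 'I_n, (k <= j)%N ==> (Z r j == 0)]) => [/forallP H | /forallPn [j hj]].
  rewrite EM row_mul mulmx_sum_row big_mkcond /=.
  have -> : \sum_(j < n) row r (mz Z) 0 j *: row j B =
            \sum_(j < n | (j < k)%N) row r (mz Z) 0 j *: row j B.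
    rewrite [RHS]big_mkcond; apply: eq_bigr => j _; case: ifP => // hj.
    by move: (H j); rewrite leqNgt hj /= !mxE => /eqP ->; rewrite scale0r.
  rewrite (big_ord_narrow hkn).
  set v := \row_(i < k) row r (mz Z) 0 (widen_ord hkn i).
  have -> : \sum_(i < k) row r (mz Z) 0 (widen_ord hkn i) *: row (widen_ord hkn i) B
            = v *m \matrix_(i < k) row (widen_ord hkn i) B.
    rewrite mulmx_sum_row; apply: eq_bigr => i _; congr (_ *: _); first by rewrite /v !mxE.
    by apply/rowP => t; rewrite !mxE.
  exact: submxMl.
move: hj; rewrite negb_imply => /andP [hkj nzj].
have [r' hr'] := bnd r j nzj.
have hkp : (k <= p r')%N by apply: leq_trans hkj hr'.
have := comb hkn ha (fun i => dotv_ge0 (gso B i)) gap pinj hkp.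
move=> hc; have := lt_le_trans Msmall (le_trans hc pr); by rewrite EM ltxx.
Qed.

End Ech.

Section Main.
Variable R : realType.

Lemma lat_row n d (B : 'M[R]_(n, d)) (i : 'I_n) : lat B (row i B).
Proof.
exists (fun j => (j == i)%:Z); rewrite (bigD1 i) //= eqxx big1 ?addr0 ?scale1r //.
by move=> j /negbTE ->; rewrite scale0r.
Qed.

Lemma lat_trans n l d (B : 'M[R]_(n, d)) (C : 'M[R]_(l, d)) :
  (forall i, lat B (row i C)) -> forall v, lat C v -> lat B v.
Proof.
move=> HC v [z ->]; have [z' Hz'] := fin_all_exists HC.
exists (fun j => \sum_t z t * z' t j).
under eq_bigr do rewrite Hz' scaler_sumr.
rewrite exchange_big /=; apply: eq_bigr => j _.
rewrite rmorph_sum scaler_suml; apply: eq_bigr => t _.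
by rewrite scalerA rmorphM.
Qed.

Lemma sel_mul k l (hkl : (k <= l)%N) :
  let S := \matrix_(t < k, j < l) ((widen_ord hkl t == j)%:R : R) in
  S *m S^T = 1%:M.
Proof.
move=> S; apply/matrixP => a b; rewrite !mxE (bigD1 (widen_ord hkl a)) //= big1.
  have wi : injective (widen_ord hkl) by move=> x y /(congr1 val) h; apply: val_inj.
  by rewrite !mxE eqxx mul1r addr0 (inj_eq wi) eq_sym.
by move=> j hj; rewrite !mxE eq_sym (negbTE hj) mul0r.
Qed.

End Main.

Theorem mainTheorem16 (R : realType) (n d : nat) (B : 'M[R]_(n, d))
  (Brat : forall (i : 'I_n) (j : 'I_d), exists q : rat, B i j = ratr q)
  (Bfree : row_free B)
  (k : nat) (hk1 : (1 <= k)%N) (hkn : (k <= n)%N)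
  (alpha : R) (halpha : Num.sqrt n%:R < alpha)
  (hgap : forall i j : 'I_n, (i < k)%N -> (k <= j)%N ->
            normv (gso B i) <= normv (gso B j) / alpha)
  (l : nat) (C : 'M[R]_(l, d))
  (Cfree : row_free C)
  (Csub : forall i : 'I_l, lat B (row i C))
  (Cprim : forall v : 'rV[R]_d, lat B v -> rspan C v -> lat C v)
  (hkl : (k <= l)%N)
  (hdet : detL C < powR (alpha / Num.sqrt (n%:R * rankin R l k)
                          * \prod_(i < n | (i < k)%N) normv (gso B i))
                        (l%:R / k%:R)) :
  forall i : 'I_n, (i < k)%N -> lat C (row i B).
Proof.
move=> i hi.
set P := \prod_(i < n | (i < k)%N) normv (gso B i) in hdet.
set del := rankin R l k in hdet.
have n1 : (1 <= n)%N by apply: leq_trans hkn.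
have l1 : (1 <= l)%N by apply: leq_trans hkl.
have sn1 : 1 <= Num.sqrt (n%:R : R).
  by rewrite -[X in X <= _]sqrtr1 ler_sqrt ?ler0n // ler1n.
have a1 : 1 < alpha by apply: le_lt_trans halpha.
have a0 : 0 < alpha by apply: lt_trans a1; exact: ltr01.
have P0 : 0 <= P by apply: prodr_ge0 => j _; exact: sqrtr_ge0.
have gap : forall i j : 'I_n, (i < k)%N -> (k <= j)%N ->
    alpha ^+ 2 * dotv (gso B i) (gso B i) <= dotv (gso B j) (gso B j).
  move=> i0 j hi0 hj; rewrite -!normv_sqr -exprMn.
  rewrite ler_sqr ?nnegrE ?mulr_ge0 ?sqrtr_ge0 ?(ltW a0) //.
  by rewrite mulrC -ler_pdivlMr // hgap.
have PE : P ^+ 2 = \prod_(i < n | (i < k)%N) dotv (gso B i) (gso B i).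
  by rewrite /P -prodrXl; apply: eq_bigr => j _; rewrite normv_sqr.
have gC : 0 < gram C by rewrite lt0r gram_neq0 // gram_ge0.
have DC : 0 < detL C by rewrite /detL sqrtr_gt0.
have lk0 : (l%:R / k%:R : R) != 0.
  by rewrite mulf_neq0 ?invr_eq0 ?pnatr_eq0 -?lt0n.
case: (lerP del 0) => hdel.
  move: hdet; rewrite ler0_sqrtr ?mulr_ge0_le0 // invr0 mulr0 mul0r powR0 //.
  by rewrite ltNge sqrtr_ge0.
move: hdel; rewrite /del /rankin.
set Out := (X in sup X).
move=> hdel.
pose e : R := 2 * k%:R / l%:R.
pose X := [set y : R | exists C0 : 'M[R]_(k, d), row_free C0 /\
   (forall i, lat C (row i C0)) /\ y = detL C0 ^+ 2 / powR (detL C) e]%classic.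
have hs : has_sup Out.
  case: (classic (has_sup Out)) => // nhs; move: hdel; by rewrite sup_out // ltxx.
have XO : Out (inf X) by exists d, C.
have infd : inf X <= sup Out by apply: sup_upper_bound.
have pD : 0 < powR (detL C) e by apply: powR_gt0.
pose S := \matrix_(t < k, j < l) ((widen_ord hkl t == j)%:R : R).
have SC_free : row_free (S *m C).
  case/row_freeP: Cfree => R' HR'; apply/row_freeP; exists (R' *m S^T).
  by rewrite mulmxA -(mulmxA S) HR' mulmx1 sel_mul.
have SC_lat : forall t, lat C (row t (S *m C)).
  move=> t; rewrite row_mul mulmx_sum_row; exists (fun j => (widen_ord hkl t == j)%:Z).
  by apply: eq_bigr => j _; rewrite !mxE.
have Xne : (X !=set0)%classic by exists (detL (S *m C) ^+ 2 / powR (detL C) e), (S *m C).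
have hpow : powR (detL C) e < (alpha / Num.sqrt (n%:R * del) * P) ^+ 2.
  set b0 := alpha / Num.sqrt (n%:R * del) * P in hdet *.
  have e0 : 0 < e by rewrite /e divr_gt0 ?mulr_gt0 ?ltr0n.
  rewrite -powR_mulrn ?mulr_ge0 ?invr_ge0 ?sqrtr_ge0 ?(ltW a0) //.
  have -> : (2%:R : R) = (l%:R / k%:R) * e.
    have hk : (k%:R : R) != 0 by rewrite pnatr_eq0 -lt0n.
    have hl : (l%:R : R) != 0 by rewrite pnatr_eq0 -lt0n.
    rewrite /e; field; by rewrite hk hl.
  rewrite [X in _ < X]powRrM; apply: (gt0_ltr_powR e0); rewrite ?nnegrE ?powR_ge0 //.
  exact: ltW.
have ndel : 0 < n%:R * del by rewrite mulr_gt0 ?ltr0n.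
have b0sq : (alpha / Num.sqrt (n%:R * del) * P) ^+ 2 = alpha ^+ 2 * P ^+ 2 / (n%:R * del).
  by rewrite !exprMn exprVn sqr_sqrtr ?ltW // mulrAC.
rewrite b0sq ltr_pdivlMr // in hpow.
set t := alpha ^+ 2 * P ^+ 2 / powR (detL C) e.
have dlt : del < t.
  rewrite /t ltr_pdivlMr //; apply: le_lt_trans hpow.
  rewrite mulrC; apply: ler_wpM2l; first exact: ltW.
  by rewrite ler_peMl ?ler1n //; exact: ltW.
have [y [Xy yt]] : exists y, X y /\ y < t.
  apply: NNPP => H.
  have lb : lbound X t.
    by move=> y Xy; rewrite leNgt; apply/negP => yt; apply: H; exists y.
  have := lb_le_inf Xne lb; rewrite leNgt => /negP; apply.
  exact: le_lt_trans infd dlt.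
case: Xy => C0 [C0f [C0lat yE]]; rewrite yE /t ltr_pM2r ?invr_gt0 // in yt.
have gsmall : gram C0 < alpha ^+ 2 * \prod_(i < n | (i < k)%N) dotv (gso B i) (gso B i).
  by rewrite -PE -(sqr_sqrtr (gram_ge0 C0)).
have ha : 1 <= alpha ^+ 2 by rewrite exprn_ege1 // ltW.
have sub := core hkn ha gap C0f (fun t => lat_trans Csub (C0lat t)) gsmall.
set Bk := \matrix_(i < k) row (widen_ord hkn i) B in sub.
have [_ eqr] := mxrank_leqif_sup sub.
have rC : \rank C0 = k by apply/eqP.
have BkC : (Bk <= C0)%MS.
  rewrite -eqr eqn_leq (mxrankS sub) /= rC; exact: rank_leq_row.
have rowB : row i B = row (Ordinal hi) Bk.
  by rewrite /Bk rowK; congr row; apply: val_inj.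
have /submxP [u hu] : (row i B <= C0)%MS.
  by apply: submx_trans BkC; rewrite rowB row_sub.
have [z Hz] := fin_all_exists C0lat.
pose Zr : 'M[R]_(k, l) := \matrix_(r, j) (z r j)%:~R.
have EC0 : C0 = Zr *m C.
  apply/row_matrixP => r; rewrite row_mul mulmx_sum_row Hz.
  by apply: eq_bigr => j _; rewrite !mxE.
apply: Cprim; first exact: lat_row.
exists (fun j => (u *m Zr) 0 j); by rewrite hu EC0 mulmxA mulmx_sum_row.
Qed.
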